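(* If $w\in\Sigma^*$ is square-free, then every scattered factor $u$ of $w$ with $|E(w,u)|\ge2$ satisfies $|C(w,u)|>1$.
   Context: A word $w$ is square-free if it has no factor of the form $yy$ with $y$ a nonempty word. An embedding of $u$ in $w$ is a map $e:\{1,\dots,|u|\}\to\{1,\dots,|w|\}$ with $e(1)<\dots<e(|u|)$ and $u[i]=w[e(i)]$; $E(w,u)$ is the set of embeddings of $u$ in $w$. The shuffle $\mathrm{Sh}(u,v)$ is the set of words of length $|u|+|v|$ admitting an embedding of $u$ and one of $v$ with disjoint images covering all positions, and $C(w,u)=\{v\in\Sigma^{|w|-|u|}: w\in\mathrm{Sh}(u,v)\}$. *)

(* Defs.v *)
From mathcomp Require Import all_boot.
Set Implicit Arguments. Unset Strict Implicit. Unset Printing Implicit Defensive.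

Section Words.
Variable T : finType.

Definition square_free (w : seq T) : Prop :=
  forall (x y z : seq T), w = x ++ y ++ y ++ z -> y = [::].

Definition is_embedding (w u : seq T) (e : {ffun 'I_(size u) -> 'I_(size w)}) : bool :=
  [forall i : 'I_(size u), forall j : 'I_(size u), (i < j) ==> (e i < e j)] &&
  [forall i : 'I_(size u), nth None (map Some u) i == nth None (map Some w) (e i)].

Arguments is_embedding w u e : clear implicits.

Definition embeddings (w u : seq T) : {set {ffun 'I_(size u) -> 'I_(size w)}} :=
  [set e | is_embedding w u e].

Definition scattered_factor (u w : seq T) : Prop :=
  exists e : {ffun 'I_(size u) -> 'I_(size w)}, is_embedding w u e.

Definition in_shuffle (w u v : seq T) : bool :=
  (size w == size u + size v) &&
  [exists eu : {ffun 'I_(size u) -> 'I_(size w)},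
   exists ev : {ffun 'I_(size v) -> 'I_(size w)},
    [&& is_embedding w u eu, is_embedding w v ev,
        [forall i, forall j, eu i != ev j] &
        [forall k : 'I_(size w), [exists i, eu i == k] || [exists j, ev j == k]]]].

Definition complements (w u : seq T) : {set (size w - size u).-tuple T} :=
  [set v : (size w - size u).-tuple T | in_shuffle w u v ].

End Words.

(* Main.v *)
Require Import Defs.
From mathcomp Require Import all_boot.
From mathcomp Require Import zify.

Lemma count_card n (P : pred nat) : count P (iota 0 n) = #|[pred k : 'I_n | P k]|.
Proof. rewrite -val_enum_ord count_map -size_filter cardE. congr size. 
rewrite /enum_mem -filter_predI. apply: eq_filter => x /=. by rewrite andbT. Qed.

Section S.
Variable T : finType.

Lemma emb_lt (w u : seq T) e (i j : 'I_(size u)) : @is_embedding T w u e -> i < j -> e i < e j.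
Proof. by case/andP=> /forallP /(_ i) /forallP /(_ j) /implyP H _ /H. Qed.

Lemma emb_nth (w u : seq T) e (i : 'I_(size u)) : @is_embedding T w u e ->
  nth None (map Some u) i = nth None (map Some w) (e i).
Proof. by case/andP=> _ /forallP /(_ i) /eqP. Qed.

Arguments emb_lt [w u e i j].
Arguments emb_nth [w u e].
Lemma emb_inj (w u : seq T) e : @is_embedding T w u e -> injective e.
Proof.
move=> He i j Eij; apply: val_inj => /=; case: (ltngtP i j) => // H.
- by have := emb_lt He H; rewrite Eij ltnn.
- by have := emb_lt He H; rewrite Eij ltnn.
Qed.

Arguments emb_inj [w u e].
Definition inimg (w u : seq T) (e : {ffun 'I_(size u) -> 'I_(size w)}) (k : nat) : bool :=
  [exists l, val (e l) == k].
Definition cpos (w u : seq T) e := [seq k <- iota 0 (size w) | ~~ inimg w u e k].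
Definition cword (x0 : T) (w u : seq T) e := map (nth x0 w) (cpos w u e).

Lemma size_cpos (w u : seq T) e : @is_embedding T w u e -> size (cpos w u e) = size w - size u.
Proof.
move=> He; rewrite /cpos size_filter.
have HP : count (inimg w u e) (iota 0 (size w)) = size u.
  rewrite count_card.
  rewrite -[in RHS](card_ord (size u)) -cardsT -(card_imset [set: 'I_(size u)] (emb_inj He)).
  apply: eq_card => k /=; rewrite /inimg; apply/existsP/imsetP.
  - case=> l /eqP El; exists l => //; first by rewrite in_setT.
    by apply: val_inj.
  - by case=> l _ ->; exists l.
have := count_predC (inimg w u e) (iota 0 (size w)). rewrite size_iota HP => H.
by rewrite -[in RHS]H addKn.
Qed.

Lemma emb_size (w u : seq T) e : @is_embedding T w u e -> size u <= size w.
Proof. by move=> He; have := leq_card _ (emb_inj He); rewrite !card_ord. Qed.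

Lemma cpos_mem (w u : seq T) e k : (k \in cpos w u e) = (k < size w) && ~~ inimg w u e k.
Proof. by rewrite /cpos mem_filter mem_iota add0n andbC. Qed.

Lemma cpos_lt (w u : seq T) e j : j < size (cpos w u e) -> nth 0 (cpos w u e) j < size w.
Proof. by move=> Hj; have := mem_nth 0 Hj; rewrite cpos_mem => /andP[]. Qed.

Lemma cpos_notin (w u : seq T) e j : j < size (cpos w u e) -> ~~ inimg w u e (nth 0 (cpos w u e) j).
Proof. by move=> Hj; have := mem_nth 0 Hj; rewrite cpos_mem => /andP[]. Qed.

Lemma cpos_sorted (w u : seq T) e : sorted ltn (cpos w u e).
Proof. exact: (sorted_filter ltn_trans _ (iota_ltn_sorted 0 _)). Qed.

Lemma cword_lt x0 (w u : seq T) e (j : 'I_(size (cword x0 w u e))) :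
  nth 0 (cpos w u e) j < size w.
Proof. apply: cpos_lt; rewrite -(size_map (nth x0 w)); exact: ltn_ord. Qed.

Definition cemb x0 (w u : seq T) e : {ffun 'I_(size (cword x0 w u e)) -> 'I_(size w)} :=
  [ffun j => Ordinal (@cword_lt x0 w u e j)].

Lemma in_shuffle_cword x0 (w u : seq T) e : @is_embedding T w u e ->
  in_shuffle w u (cword x0 w u e).
Proof.
move=> He; apply/andP; split.
  by rewrite size_map size_cpos // subnKC // (@emb_size w u e He).
apply/existsP; exists e; apply/existsP; exists (cemb x0 w u e); apply/and4P; split.
- exact: He.
- apply/andP; split; apply/forallP => i.
  + apply/forallP => j; apply/implyP => Hij; rewrite !ffunE /=.
    apply: (sorted_ltn_nth ltn_trans 0 (cpos_sorted w u e)) => //; rewrite inE -(size_map (nth x0 w)) ?ltn_ord //.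
  + rewrite ffunE /=.
    have Hi : i < size (cpos w u e) by rewrite -(size_map (nth x0 w)) ltn_ord.
    rewrite (nth_map x0) ?size_map ?ltn_ord // (nth_map 0) // (nth_map x0) ?cpos_lt //.
- apply/forallP => i; apply/forallP => j; apply/eqP => E.
  have Hj : j < size (cpos w u e) by rewrite -(size_map (nth x0 w)) ltn_ord.
  have := @cpos_notin w u e j Hj; rewrite /inimg => /negP; apply; apply/existsP; exists i.
  by rewrite E ffunE.
- apply/forallP => k; case: (boolP (inimg w u e k)) => [/existsP [i /eqP Ei]| Hn].
    by apply/orP; left; apply/existsP; exists i; apply/eqP; apply: val_inj.
  have Hk : (val k \in cpos w u e) by rewrite cpos_mem ltn_ord Hn.
  have Hj : index (val k) (cpos w u e) < size (cword x0 w u e) by rewrite size_map index_mem.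
  apply/orP; right; apply/existsP; exists (Ordinal Hj); apply/eqP; apply: val_inj.
  by rewrite ffunE /= nth_index.
Qed.

Lemma sqfree_neq x0 (w : seq T) p : square_free w -> p.+1 < size w ->
  nth x0 w p != nth x0 w p.+1.
Proof.
move=> Hsf Hp; apply/eqP => E.
have Hw : w = take p w ++ [:: nth x0 w p] ++ [:: nth x0 w p] ++ drop p.+2 w.
  rewrite -{1}(cat_take_drop p w) (drop_nth x0 (ltnW Hp)) (drop_nth x0 Hp) -E.
  done.
by have := Hsf _ _ _ Hw.
Qed.

Lemma cw_neq x0 (w : seq T) (P P' : pred nat) p : square_free w -> p.+1 < size w ->
  (forall k, k < p -> P k = P' k) -> ~~ P p -> P' p -> ~~ P' p.+1 ->
  map (nth x0 w) [seq k <- iota 0 (size w) | ~~ P k] !=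
  map (nth x0 w) [seq k <- iota 0 (size w) | ~~ P' k].
Proof.
move=> Hsf Hp Hlow HPp HP'p HP'p1.
have -> : iota 0 (size w) = iota 0 p ++ p :: p.+1 :: iota p.+2 (size w - p.+2).
  rewrite -{1}(subnKC Hp) iotaD -addn2 iotaD /= add0n -catA addn2 add0n.
  by [].
rewrite !filter_cat !map_cat.
have -> : [seq k <- iota 0 p | ~~ P k] = [seq k <- iota 0 p | ~~ P' k].
  by apply: eq_in_filter => k; rewrite mem_iota add0n => /andP[_ /Hlow ->].
rewrite eqseq_cat // /= HPp HP'p HP'p1 /= eqseq_cons eqxx /=.
by rewrite (negbTE (@sqfree_neq x0 w p Hsf Hp)).
Qed.

Lemma main_step (w u : seq T) e1 e2 (i : 'I_(size u)) :
  square_free w -> @is_embedding T w u e1 -> @is_embedding T w u e2 ->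
  (forall k : 'I_(size u), k < i -> e1 k = e2 k) -> e1 i < e2 i ->
  1 < #|complements w u|.
Proof.
move=> Hsf He1 He2 Hlow Hlt.
pose e' : {ffun 'I_(size u) -> 'I_(size w)} := [ffun k => if k == i then e1 i else e2 k].
have He' : @is_embedding T w u e'.
  apply/andP; split.
  - apply/forallP => a; apply/forallP => b; apply/implyP => Hab; rewrite !ffunE.
    case: (eqVneq a i) => [Eai|Hai]; case: (eqVneq b i) => [Ebi|Hbi].
    + by move: Hab; rewrite Eai Ebi ltnn.
    + by apply: ltn_trans Hlt _; apply: emb_lt He2 _; rewrite -Eai.
    + have Hai' : a < i by rewrite -Ebi.
      by rewrite -Hlow //; apply: emb_lt He1 _.
    + exact: emb_lt He2 Hab.
  - apply/forallP => a; rewrite ffunE; case: (eqVneq a i) => [->|_]; apply/eqP; exact: emb_nth.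
have x0 : T.
  have : 0 < size u := leq_ltn_trans (leq0n i) (ltn_ord i).
  by case: (u) => [|a _] //.
have Hsz : forall e, @is_embedding T w u e -> size (cword x0 w u e) == size w - size u.
  by move=> e He; rewrite size_map size_cpos.
pose t1 := Tuple (Hsz e2 He2).
pose t2 := Tuple (Hsz e' He').
apply/card_gt1P; exists t1, t2; split.
- by rewrite inE; exact: in_shuffle_cword.
- by rewrite inE; exact: in_shuffle_cword.
apply/eqP => E; have E' : cword x0 w u e2 = cword x0 w u e' by have := f_equal val E.
move: E'; apply/eqP.
have Hp1 : (e1 i).+1 < size w by exact: leq_ltn_trans Hlt (ltn_ord (e2 i)).
apply: (@cw_neq x0 w (inimg w u e2) (inimg w u e') (e1 i) Hsf Hp1).
- move=> k Hk; rewrite /inimg; apply/existsP/existsP => [][l /eqP El]; exists l.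
  + rewrite /e' ffunE; case: (eqVneq l i) => [Eli|_]; last by rewrite El.
    by move: El Hk Hlt; rewrite Eli => -> H1 H2; have := ltn_trans H1 H2; rewrite ltnn.
    move: El; rewrite /e' ffunE; case: (eqVneq l i) => [Eli|_ /= <-] //.
    by move=> El; move: Hk; rewrite -El ltnn.
- apply/existsP => [][l /eqP El]; case: (ltngtP l i) => Hli.
  + by move: El; rewrite -Hlow // => El; have := emb_lt He1 Hli; rewrite El ltnn.
  + by have := emb_lt He2 Hli; rewrite El; lia.
  + move: El Hlt; have -> : l = i by apply: val_inj.
    by move=> ->; rewrite ltnn.
- by apply/existsP; exists i; rewrite /e' ffunE eqxx.
- apply/existsP => [][l /eqP]; rewrite /e' ffunE; case: (eqVneq l i) => [_|Hli] /= El; first by move/eqP: El; rewrite eqn_leq ltnn andbF.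
  case: (ltngtP l i) => Hli'.
  + by move: El; rewrite -Hlow // => El; have := emb_lt He1 Hli'; rewrite El; lia.
  + by have := emb_lt He2 Hli'; rewrite El; lia.
  + by move/eqP: Hli; apply; apply: val_inj.
Qed.
End S.

Theorem lemma29 (T : finType) (w u : seq T) :
  square_free w ->
  scattered_factor u w ->
  2 <= #|embeddings w u| ->
  1 < #|complements w u|.
Proof.
move=> Hsf _ /card_gt1P [e1 [e2 [He1 He2 Hne]]].
rewrite !inE in He1 He2.
have [i0 Hi0] : exists i, e1 i != e2 i.
  case: (pickP (fun i => e1 i != e2 i)) => [i Hi | H]; first by exists i.
  have E12 : e1 = e2 by apply/ffunP => x; apply/eqP; have := H x; rewrite /= => /negbFE.
  by rewrite E12 eqxx in Hne.
have Hex : exists n, [exists j : 'I_(size u), (val j == n) && (e1 j != e2 j)].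
  by exists (val i0); apply/existsP; exists i0; rewrite eqxx Hi0.
case: (ex_minnP Hex) => m /existsP [j /andP [/eqP Hj Hne']] Hmin.
have Hlow : forall k : 'I_(size u), k < j -> e1 k = e2 k.
  move=> k Hk; apply/eqP; apply/negPn/negP => Hk'.
  have := Hmin (val k); rewrite -Hj leqNgt Hk /= => H; suff : false by []; apply: H; apply/existsP; exists k; by rewrite eqxx Hk'.
case: (ltngtP (e1 j) (e2 j)) => Hlt.
- exact: (@main_step T w u e1 e2 j Hsf He1 He2 Hlow Hlt).
- by apply: (@main_step T w u e2 e1 j Hsf He2 He1 _ Hlt) => k Hk; rewrite Hlow.
- have E : e1 j = e2 j by apply: val_inj.
  by rewrite E eqxx in Hne'.
Qed.
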